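(* Let $K\ge2$ and let $p,q\in\mathbb{R}^K$ satisfy $\sum_k p_k=\sum_k q_k=1$ (so that $p,q\in s_\alpha^{-1}(\Delta_{K-1})$ for all $\alpha$ sufficiently close to $1$). Then $\frac{2\alpha}{(1-\alpha)^2K}D_{\mathrm{SKL},\alpha}(p\|q)\to\|p-q\|^2$ as $\alpha\to1$, where $\|\cdot\|$ is the Euclidean norm on $\mathbb{R}^K$.
   Context: $\Delta_{K-1}$ is the probability simplex in $\mathbb{R}^K$. For $\alpha\in\mathbb{R}$, $s_\alpha(v)=(1-\alpha)v+\frac{\alpha}{K}$ componentwise, and $s_\alpha^{-1}(\Delta_{K-1})=\{v\in\mathbb{R}^K: s_\alpha(v)\in\Delta_{K-1}\}$. The smoothed KL divergence is $D_{\mathrm{SKL},\alpha}(p\|q)=\sum_{k=1}^K s_\alpha(p_k)\ln\frac{s_\alpha(p_k)}{s_\alpha(q_k)}$ for $p,q\in s_\alpha^{-1}(\Delta_{K-1})$. *)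

(* Defs.v *)
From HB Require Import structures.
From mathcomp Require Import all_boot all_order all_algebra.
From mathcomp Require Import all_classical all_reals all_analysis.
Set Implicit Arguments. Unset Strict Implicit. Unset Printing Implicit Defensive.
Import Order.TTheory GRing.Theory Num.Theory.
Local Open Scope ring_scope.

Definition smooth (R : realType) (K : nat) (alpha : R) (v : 'I_K -> R) : 'I_K -> R :=
  fun k => (1 - alpha) * v k + alpha / K%:R.

Definition DSKL (R : realType) (K : nat) (alpha : R) (p q : 'I_K -> R) : R :=
  \sum_(k < K) smooth alpha p k * ln (smooth alpha p k / smooth alpha q k).

Definition sqnorm (R : realType) (K : nat) (v : 'I_K -> R) : R :=
  \sum_(k < K) v k ^+ 2.

(* Main.v *)
Require Import Defs.
From HB Require Import structures.
From mathcomp Require Import all_boot all_order all_algebra.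
From mathcomp Require Import all_classical all_reals all_analysis.
From mathcomp Require Import ring lra.
Import Order.TTheory GRing.Theory Num.Theory.
Import numFieldTopology.Exports numFieldNormedType.Exports.
Local Open Scope classical_set_scope.
Local Open Scope ring_scope.

Section L.
Variable R : realType.
Definition fL (t : R) := ln t + t * t / 2 - 2 * t.
Definition dfL (t : R) := t^-1 + t - 2.

Lemma fL_der (x : R) : 0 < x -> is_derive x 1 fL (dfL x).
Proof.
move=> x0.
have h1 := is_derive1_ln x0.
have -> : fL = ((@ln R) + (fun t => t * t / 2)) - (fun t => 2 * t).
  by apply/funext => t.
apply: is_derive_eq.
rewrite /dfL.
rewrite !scaler0 add0r. rewrite /GRing.scale /= !mulr1. lra. Qed.

Lemma fL_dfL_bound (c h : R) : 1/2 <= c -> (c - 1)^+2 <= h^+2 ->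
  `|dfL c * h| <= 2 * `|h|^+3.
Proof.
move=> c12 ct.
have c0 : 0 < c by lra.
have e : dfL c = (c - 1)^+2 * c^-1 by rewrite /dfL; field; rewrite gt_eqF.
have ic2 : c^-1 <= 2.
  rewrite -[2]invrK lef_pV2 ?posrE //; lra.
have ic0 : 0 < c^-1 by rewrite invr_gt0.
rewrite e normrM ger0_norm; last by apply: mulr_ge0 => //; [exact: sqr_ge0|exact: ltW].
have : (c - 1)^+2 * c^-1 <= 2 * `|h|^+2.
  rewrite -(real_normK (num_real h)) in ct.
  have : 0 <= (c - 1)^+2 by exact: sqr_ge0.
  nra.
have : 0 <= `|h| by [].
rewrite !exprSr expr0 !mul1r. nra.
Qed.

Lemma ln_taylor (t : R) : 1/2 <= t <= 3/2 ->
  `|ln t - (t - 1) + (t - 1)^+2 / 2| <= 2 * `|t - 1|^+3.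
Proof.
move=> /andP[t1 t2].
have -> : ln t - (t - 1) + (t - 1)^+2 / 2 = fL t - fL 1.
  by rewrite /fL ln1; field.
have dv (a b : R) : 0 < a -> {within `[a, b], continuous fL}.
  move=> a0; apply: derivable_within_continuous => x; rewrite in_itv /= => /andP[ax _].
  apply: ex_derive; apply: fL_der; lra.
have dd (a b : R) : 0 < a -> forall x, x \in `]a, b[ -> is_derive x 1 fL (dfL x).
  move=> a0 x; rewrite in_itv /= => /andP[ax _]; apply: fL_der; lra.
have [t1'|t1'] := leP 1 t.
  have [c cI e] := MVT_segment t1' (dd 1 t ltr01) (dv 1 t ltr01).
  move: cI; rewrite in_itv /= => /andP[c1 c2].
  have e' : fL t - fL 1 = dfL c * (t - 1) by exact: e.
  rewrite e'.
  apply: fL_dfL_bound; first lra.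
  nra.
have t0 : 0 < t by lra.
have [c cI e] := MVT_segment (ltW t1') (dd t 1 t0) (dv t 1 t0).
move: cI; rewrite in_itv /= => /andP[c1 c2].
have e' : fL 1 - fL t = dfL c * (1 - t) by exact: e.
rewrite -normrN opprB e' .
have -> : `|t - 1| = `|1 - t| by rewrite -normrN opprB.
apply: fL_dfL_bound; first lra.
nra.
Qed.
End L.

Section K.
Variable R : realType.

Lemma key (Kr p q x e a b : R) : 2 <= Kr -> x != 1 ->
  `|1 - x| * (4 * Kr * (`|p| + `|q| + 1)) <= 1 ->
  e = 1 - x -> a = e * p + x / Kr -> b = e * q + x / Kr ->
  `|2 * x / (e ^+ 2 * Kr) * (a * ln (a / b) + (b - a)) - (q - p) ^+ 2|
  <= (2 * Kr * (q - p) ^+ 2 * `|p| + 32 * Kr * `|q - p| ^+ 3) * `|e|.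
Proof.
move=> K2 x1 hx he hae hbe.
have Kp : 0 < Kr by lra.
set iK := Kr^-1.
have KiK : Kr * iK = 1 by rewrite mulfV // gt_eqF.
have iK0 : 0 < iK by rewrite invr_gt0.
have e0 : e != 0 by rewrite he subr_eq0 eq_sym.
set E := `|e|.
have E0 : 0 < E by rewrite normr_gt0.
have eE : e ^+ 2 = E ^+ 2 by rewrite real_normK ?num_real.
set d := q - p.
set D := `|d|.
have D0 : 0 <= D by exact: normr_ge0.
have dD : d ^+ 2 = D ^+ 2 by rewrite real_normK ?num_real.
have hx' : E * (4 * Kr * (`|p| + `|q| + 1)) <= 1 by rewrite /E he.
have Es : E * 4 * (`|p| + `|q| + 1) <= iK.
  have : 0 <= (1 - E * (4 * Kr * (`|p| + `|q| + 1))) * iK by apply: mulr_ge0; lra.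
  nra.
have p0 : 0 <= `|p| by exact: normr_ge0.
have q0 : 0 <= `|q| by exact: normr_ge0.
have ea : a - iK = e * (p - iK) by rewrite hae he /iK; field; rewrite gt_eqF.
have ha : `|a - iK| <= E * (`|p| + 1).
  rewrite ea normrM ler_wpM2l //; apply: le_trans (ler_normB _ _) _.
  rewrite (gtr0_norm iK0); nra.
have a0 : 3 / 4 * iK <= a.
  have := ler_norm (iK - a); rewrite distrC; nra.
have ap : 0 < a by nra.
set ia := a^-1.
have aia : a * ia = 1 by rewrite mulfV // gt_eqF.
have ia0 : 0 < ia by rewrite invr_gt0.
have ia2 : ia <= 2 * Kr.
  have : ia * iK * (3/4) <= ia * a by nra.
  nra.
set u := (b - a) / a.
have bae : b - a = e * d by rewrite hbe hae /d; ring.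
have ue : u = e * d * ia by rewrite /u bae.
have hu : `|u| = E * D * ia by rewrite ue !normrM (gtr0_norm ia0).
have ED : E * D <= E * (`|p| + `|q|).
  rewrite ler_wpM2l //; first exact: ltW.
  by rewrite /D /d [X in _ <= X]addrC; apply: ler_normB.
have hu2 : `|u| <= 1/2.
  rewrite hu. nra.
have bau : b / a = 1 + u by rewrite /u; field; rewrite gt_eqF.
have lt := @ln_taylor R (b / a).
have hu1 : 1 + u - 1 = u by rewrite addrAC subrr add0r.
rewrite bau hu1 in lt.
have {lt} lt := lt ltac:(apply/andP; split; have := ler_norm u; have := ler_norm (- u); rewrite normrN; lra).
set r := ln (1 + u) - u + u ^+ 2 / 2 in lt.
have bp : 0 < b.
  have -> : b = a * (1 + u) by rewrite -bau; field; rewrite gt_eqF.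
  have := ler_norm (- u); rewrite normrN => ?. apply: mulr_gt0 => //; lra.
have lnab : ln (a / b) = - ln (1 + u).
  by rewrite -bau -lnV ?posrE ?divr_gt0 // invf_div.
have eq1 : 2 * x / (e ^+ 2 * Kr) * (a * ln (a / b) + (b - a)) - d ^+ 2
   = - (e * d ^+ 2 * p * ia) - 2 * x / (e ^+ 2 * Kr) * a * r.
  have hb : b = a + e * d by rewrite -bae; ring.
  have an0 : e * p + x / Kr != 0 by rewrite -hae gt_eqF.
  rewrite lnab /r ue /ia hb hae.
  field.
  have -> : e * p * Kr + x = a * Kr.
    by rewrite hae mulrDl mulrAC divfK // gt_eqF.
  by rewrite e0 mulf_neq0 ?andbT ?gt_eqF.
rewrite eq1.
have E8 : E <= 1/8.
  have : 8 <= 4 * Kr * (`|p| + `|q| + 1) by nra.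
  nra.
have x2 : `|x| <= 2.
  have -> : x = 1 - e by rewrite he; ring.
  apply: le_trans (ler_normB _ _) _; rewrite normr1 -/E; lra.
have bX : `|e * d ^+ 2 * p * ia| <= 2 * Kr * d ^+ 2 * `|p| * E.
  rewrite !normrM (gtr0_norm ia0) -/E -/D.
  have -> : D * D = d ^+ 2 by rewrite dD expr2.
  have : 0 <= E * d ^+ 2 * `|p| by apply: mulr_ge0 => //; apply: mulr_ge0; [exact: ltW|exact: sqr_ge0].
  nra.
have hr : `|r| <= 2 * (E * D * ia) ^+ 3 by rewrite -hu.
have bY : `|2 * x / (e ^+ 2 * Kr) * a * r| <= 32 * Kr * D ^+ 3 * E.
  have -> : 2 * x / (e ^+ 2 * Kr) * a = x * (2 * a * iK / E ^+ 2).
    by rewrite -eE /iK; field; rewrite e0 gt_eqF.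
  have c0 : 0 <= 2 * a * iK / E ^+ 2.
    by apply: divr_ge0; [apply: mulr_ge0; [apply: mulr_ge0; lra|lra]|exact: sqr_ge0].
  rewrite normrM normrM (ger0_norm c0).
  apply: le_trans (_ : `|x| * (2 * a * iK / E ^+ 2) * (2 * (E * D * ia) ^+ 3) <= _).
    by apply: ler_wpM2l => //; apply: mulr_ge0.
  have -> : `|x| * (2 * a * iK / E ^+ 2) * (2 * (E * D * ia) ^+ 3)
      = 4 * `|x| * (E * D ^+ 3) * (ia ^+ 2 * iK).
    by rewrite /ia; field; rewrite gt_eqF // gt_eqF.
  have ia4 : ia ^+ 2 * iK <= 4 * Kr.
    have : ia ^+ 2 <= (2 * Kr) ^+ 2 by rewrite ler_sqr ?nnegrE; lra.
    have : (2 * Kr) ^+ 2 * iK = 4 * Kr by rewrite /iK; field; rewrite gt_eqF.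
    nra.
  have i0 : 0 <= ia ^+ 2 * iK by apply: mulr_ge0; [exact: sqr_ge0|lra].
  have ED3 : 0 <= E * D ^+ 3 by apply: mulr_ge0; [lra|exact: exprn_ge0].
  have xx : 0 <= `|x| by exact: normr_ge0.
  have : `|x| * (E * D ^+ 3) * (ia ^+ 2 * iK) <= 2 * (E * D ^+ 3) * (4 * Kr).
    apply: ler_pM => //; first exact: mulr_ge0.
    by apply: ler_pM.
  nra.
apply: le_trans (ler_normB _ _) _.
rewrite normrN. lra.
Qed.
End K.

Section M.
Variable R : realType.

Lemma near1_close (r : R) : 0 < r -> \forall x \near (1:R)^', `|1 - x| < r.
Proof.
move=> r0; apply: nbhs_dnbhs.
apply/nbhs_ballP; exists r => //= y.
Qed.

Lemma near1_neq : \forall x \near (1:R)^', x != 1.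
Proof. exact: nbhs_dnbhs_neq. Qed.

Lemma bound_cvg (f : R -> R) (l M : R) : 0 <= M ->
  (\forall x \near (1:R)^', `|f x - l| <= M * `|1 - x|) -> f @ (1:R)^' --> l.
Proof.
move=> M0 H; apply/cvgrPdist_le => e e0.
have r0 : 0 < e / (M + 1) by apply: divr_gt0; lra.
have Hb := near1_close _ r0.
near=> x.
have h1 : `|f x - l| <= M * `|1 - x| by near: x.
have h2 : `|1 - x| < e / (M + 1) by near: x.
rewrite distrC; apply: le_trans h1 _.
have h3 : `|1 - x| * (M + 1) <= e.
  by rewrite -ler_pdivlMr ?ltW //; lra.
have : 0 <= `|1 - x| by exact: normr_ge0.
nra.
Unshelve. all: by end_near.
Qed.
End M.

Theorem theorem2 (R : realType) (K : nat) (hK : (2 <= K)%N) (p q : 'I_K -> R)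
  (hp : \sum_(k < K) p k = 1) (hq : \sum_(k < K) q k = 1) :
  (fun alpha : R => 2 * alpha / ((1 - alpha) ^+ 2 * K%:R) * DSKL alpha p q)
    @ (1 : R)^' --> sqnorm (fun k => p k - q k).
Proof.
set Kr := (K%:R : R).
have K2 : 2 <= Kr by rewrite /Kr ler_nat.
pose T k (x : R) := 2 * x / ((1 - x) ^+ 2 * Kr) *
  (smooth x p k * ln (smooth x p k / smooth x q k) + (smooth x q k - smooth x p k)).
pose Mk k := 2 * Kr * (q k - p k) ^+ 2 * `|p k| + 32 * Kr * `|q k - p k| ^+ 3.
have Fe : forall x, 2 * x / ((1 - x) ^+ 2 * Kr) * DSKL x p q = \sum_k T k x.
  move=> x; rewrite /T -mulr_sumr big_split /=.
  have -> : \sum_(k < K) (smooth x q k - smooth x p k) = 0.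
    rewrite (eq_bigr (fun k => (1 - x) * (q k - p k))); last first.
      by move=> i _; rewrite /smooth; ring.
    by rewrite -mulr_sumr sumrB hp hq subrr mulr0.
  by rewrite addr0.
have Mk0 : forall k, 0 <= Mk k.
  move=> k; rewrite /Mk; apply: addr_ge0.
    apply: mulr_ge0; last exact: normr_ge0.
    by apply: mulr_ge0; [apply: mulr_ge0; lra|exact: sqr_ge0].
  by apply: mulr_ge0; [apply: mulr_ge0; lra|exact: exprn_ge0 (normr_ge0 _)].
have Hk : forall k, \forall x \near (1:R)^', `|T k x - (p k - q k) ^+ 2| <= Mk k * `|1 - x|.
  move=> k.
  have C0 : 0 < 4 * Kr * (`|p k| + `|q k| + 1).
    apply: mulr_gt0; first lra.
    have := normr_ge0 (p k); have := normr_ge0 (q k); lra.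
  have C1 : 0 < (4 * Kr * (`|p k| + `|q k| + 1))^-1 by rewrite invr_gt0.
  have Hb := @near1_close R _ C1.
  near=> x.
  have h1 : x != 1 by near: x; exact: near1_neq.
  have h2 : `|1 - x| < (4 * Kr * (`|p k| + `|q k| + 1))^-1 by near: x.
  have -> : (p k - q k) ^+ 2 = (q k - p k) ^+ 2 by rewrite -sqrrN opprB.
  apply: (@key R Kr (p k) (q k) x (1 - x)) => //.
  by rewrite -ler_pdivlMr // div1r ltW.
apply: (@bound_cvg R _ _ (\sum_k Mk k)); first by apply: sumr_ge0 => k _.
near=> x.
have H : forall k, `|T k x - (p k - q k) ^+ 2| <= Mk k * `|1 - x|.
  by near: x; apply: filter_forall => k; exact: Hk.
rewrite Fe /sqnorm -sumrB.
apply: le_trans (ler_norm_sum _ _ _) _.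
rewrite mulr_suml; apply: ler_sum => k _; exact: H.
Unshelve. all: by end_near.
Qed.
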